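(* Let $\mathsf{K}$ be an idempotent commutative semiring. Every rational series $\mathsf{S}\in\mathsf{K}[[X]]$ can be written as $$\mathsf{S}=\bigoplus_{1\leq i\leq r}\mathsf{P}_i\,(\mathsf{q}_iX^c)^*,$$ where $r\ge 0$, $\mathsf{P}_1,\dots,\mathsf{P}_r\in\mathsf{K}[X]$ are polynomials, $\mathsf{q}_1,\dots,\mathsf{q}_r\in\mathsf{K}$, and $c$ is a positive integer.
   Context: $\mathsf{K}[[X]]$ is the semiring of formal power series over $\mathsf{K}$ with coefficientwise sum $\oplus$ and Cauchy product; for a series $U$ with zero constant coefficient, $U^*=\bigoplus_{k\ge0}U^k$. A series is rational if it belongs to the smallest subset of $\mathsf{K}[[X]]$ containing $\mathsf{K}[X]$ and closed under sum, product and star (of series with zero constant coefficient). Idempotent: $u\oplus u=u$; commutative: $uv=vu$. *)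

(* Defs.v *)
From HB Require Import structures.
From mathcomp Require Import all_boot all_order all_algebra.
Set Implicit Arguments. Unset Strict Implicit. Unset Printing Implicit Defensive.
Import GRing.Theory.
Local Open Scope ring_scope.

Section Series.
Variable K : comPzSemiRingType.

Definition series := nat -> K.

Definition idempotent_sr : Prop := forall u : K, u + u = u.

Definition szero : series := fun _ => 0.
Definition sone : series := fun n => if n == 0%N then 1 else 0.
Definition sconst (a : K) : series := fun n => if n == 0%N then a else 0.
Definition smono (a : K) (c : nat) : series := fun n => if n == c then a else 0.
Definition sadd (S T : series) : series := fun n => S n + T n.
Definition smul (S T : series) : series :=
  fun n => \sum_(i < n.+1) S i * T (n - i)%N.
Fixpoint spow (U : series) (k : nat) : series :=
  if k is k'.+1 then smul U (spow U k') else sone.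
(* U^* = (+)_{k>=0} U^k ; when U 0 = 0, the coefficient of X^n in U^k
   vanishes for k > n, so the n-th coefficient of the (coefficientwise
   locally finite) infinite sum is the finite sum over k <= n.
   This formula is only used for U with zero constant coefficient. *)
Definition sstar (U : series) : series :=
  fun n => \sum_(k < n.+1) spow U k n.

Definition is_poly (S : series) : Prop :=
  exists N : nat, forall n, (N <= n)%N -> S n = 0.

Inductive rational : series -> Prop :=
| rat_poly S : is_poly S -> rational S
| rat_add S T : rational S -> rational T -> rational (sadd S T)
| rat_mul S T : rational S -> rational T -> rational (smul S T)
| rat_star U : rational U -> U 0%N = 0 -> rational (sstar U).

Definition sbig (r : nat) (F : nat -> series) : series :=
  fun n => \sum_(i < r) F i n.

End Series.

(* Main.v *)
Require Import Defs.
From mathcomp Require Import all_boot all_order all_algebra.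
From HB Require Import structures.
From Stdlib Require Import ClassicalEpsilon FunctionalExtensionality.
Local Open Scope ring_scope.
Set Implicit Arguments. Unset Strict Implicit. Unset Printing Implicit Defensive.
Import GRing.Theory.

Section Ser.
Variable K : comPzSemiRingType.

Definition ser : Type := series K.

Definition ser_eqb (S T : ser) : bool :=
  if excluded_middle_informative (S = T) then true else false.
Lemma ser_eqP : Equality.axiom ser_eqb.
Proof. by move=> S T; rewrite /ser_eqb; case: excluded_middle_informative => h; constructor. Qed.
HB.instance Definition _ := hasDecEq.Build ser ser_eqP.

Definition ser_find (P : pred ser) (n : nat) : option ser :=
  match excluded_middle_informative (exists x, P x) with
  | left h => Some (proj1_sig (constructive_indefinite_description _ h))
  | right _ => None end.
Lemma ser_find1 P n x : ser_find P n = Some x -> P x.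
Proof.
rewrite /ser_find; case: excluded_middle_informative => // h [<-].
by case: constructive_indefinite_description.
Qed.
Lemma ser_find2 (P : pred ser) : (exists x, P x) -> exists n, ser_find P n.
Proof. by move=> h; exists 0%N; rewrite /ser_find; case: excluded_middle_informative. Qed.
Lemma ser_find3 (P Q : pred ser) : P =1 Q -> ser_find P =1 ser_find Q.
Proof. by move=> h; have -> : P = Q by apply: functional_extensionality. Qed.
HB.instance Definition _ := hasChoice.Build ser ser_find1 ser_find2 ser_find3.

Lemma saddA : associative (@sadd K).
Proof. by move=> S T U; apply: functional_extensionality => n; rewrite /sadd addrA. Qed.
Lemma saddC : commutative (@sadd K).
Proof. by move=> S T; apply: functional_extensionality => n; rewrite /sadd addrC. Qed.
Lemma sadd0 : left_id (@szero K) (@sadd K).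
Proof. by move=> S; apply: functional_extensionality => n; rewrite /sadd /szero add0r. Qed.
HB.instance Definition _ := GRing.isNmodule.Build ser saddA saddC sadd0.


Lemma smul_rev (S T : series K) n :
  smul S T n = \sum_(j < n.+1) S (n - j)%N * T j.
Proof.
rewrite /smul (reindex_inj rev_ord_inj) /=.
by apply: eq_bigr => j _; rewrite (sub_ordK j).
Qed.

Lemma smulC : commutative (@smul K).
Proof.
move=> S T; apply: functional_extensionality => n.
by rewrite smul_rev /smul; apply: eq_bigr => j _; rewrite mulrC.
Qed.

Lemma smulA : associative (@smul K).
Proof.
move=> p q r; apply: functional_extensionality => i.
rewrite [LHS]/smul [RHS]smul_rev.
pose coef3 j k := p j * (q (i - j - k)%N * r k).
transitivity (\sum_(j < i.+1) \sum_(k < i.+1 | (k <= i - j)%N) coef3 j k).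
  apply: eq_bigr => /= j _; rewrite smul_rev big_distrr /=.
  by rewrite (big_ord_narrow_leq (leq_subr _ _)).
rewrite (exchange_big_dep predT) //=; apply: eq_bigr => k _.
transitivity (\sum_(j < i.+1 | (j <= i - k)%N) coef3 j k).
  apply: eq_bigl => j; rewrite -ltnS -(ltnS j) -!subSn ?leq_ord //.
  by rewrite -subn_gt0 -(subn_gt0 j) -!subnDA addnC.
rewrite (big_ord_narrow_leq (leq_subr _ _)) /smul big_distrl /=.
by apply: eq_bigr => j _; rewrite /coef3 -!subnDA addnC mulrA.
Qed.

Lemma smul1 : left_id (@sone K) (@smul K).
Proof.
move=> p; apply: functional_extensionality => i.
rewrite /smul big_ord_recl subn0 /sone /= mul1r big1 ?addr0 // => j _.
by rewrite mul0r.
Qed.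

Lemma smulDl : left_distributive (@smul K) (@sadd K).
Proof.
move=> S T U; apply: functional_extensionality => i.
by rewrite /smul /sadd -big_split /=; apply: eq_bigr => j _; rewrite mulrDl.
Qed.

Lemma smul0 : left_zero (@szero K) (@smul K).
Proof.
move=> S; apply: functional_extensionality => i.
by rewrite /smul /szero big1 // => j _; rewrite mul0r.
Qed.

HB.instance Definition _ := GRing.Nmodule_isComPzSemiRing.Build ser
  smulA smulC smul1 smulDl smul0.

Implicit Types S T U V M : ser.

Lemma coefM S T n : (S * T) n = \sum_(i < n.+1) S i * T (n - i)%N.
Proof. by []. Qed.
Lemma coefD S T n : (S + T) n = S n + T n.
Proof. by []. Qed.
Lemma coef0 n : (0 : ser) n = 0.
Proof. by []. Qed.
Lemma coef1 n : (1 : ser) n = if n == 0%N then 1 else 0.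
Proof. by []. Qed.

Lemma coef_sum (I : Type) (r : seq I) (P : pred I) (F : I -> ser) n :
  (\sum_(i <- r | P i) F i) n = \sum_(i <- r | P i) F i n.
Proof.
elim: r => [|x r IH]; first by rewrite !big_nil.
by rewrite !big_cons; case: (P x); rewrite ?coefD IH.
Qed.

Lemma spowE U k : spow U k = U ^+ k.
Proof. by elim: k => // k IH; rewrite exprS /= IH. Qed.

Lemma sstarE U n : sstar U n = \sum_(k < n.+1) (U ^+ k) n.
Proof. by rewrite /sstar; apply: eq_bigr => k _; rewrite spowE. Qed.

Lemma ser_ext S T : (forall n, S n = T n) -> S = T.
Proof. exact: functional_extensionality. Qed.

Definition low (v : nat) S := forall n, (n < v)%N -> S n = 0.

Lemma low_mul a b S T : low a S -> low b T -> low (a + b) (S * T).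
Proof.
move=> hS hT n hn; rewrite coefM big1 // => i _.
case: (ltnP i a) => hi; first by rewrite hS // mul0r.
have h2 : (n - i < b)%N.
  rewrite ltn_subLR; last by rewrite -ltnS.
  by apply: leq_trans hn _; rewrite leq_add2r.
rewrite (hT _ h2) mulr0 //.
Qed.

Lemma low0 S : low 0 S.
Proof. by []. Qed.

Lemma low_le a b S : (b <= a)%N -> low a S -> low b S.
Proof. by move=> hab h n hn; apply: h; apply: leq_trans hab. Qed.

Lemma low_exp U k : low 1 U -> low k (U ^+ k).
Proof.
move=> h; elim: k => [|k IH]; first exact: low0.
by rewrite exprS -add1n; apply: low_mul.
Qed.

Lemma low_sum (I : Type) (r : seq I) (P : pred I) (F : I -> ser) v :
  (forall i, P i -> low v (F i)) -> low v (\sum_(i <- r | P i) F i).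
Proof.
move=> h n hn; rewrite coef_sum big1 // => i Pi; exact: h.
Qed.

Definition eqN (N : nat) S T := forall n, (n < N)%N -> S n = T n.

Lemma eqN_refl N S : eqN N S S. Proof. by []. Qed.
Lemma eqN_sym N S T : eqN N S T -> eqN N T S.
Proof. by move=> h n hn; rewrite h. Qed.
Lemma eqN_trans N S T U : eqN N S T -> eqN N T U -> eqN N S U.
Proof. by move=> h1 h2 n hn; rewrite h1 ?h2. Qed.
Lemma eqN_le N L S T : (N <= L)%N -> eqN L S T -> eqN N S T.
Proof. by move=> hNM h n hn; apply: h; apply: leq_trans hNM. Qed.
Lemma eqN_add N S T S' T' : eqN N S S' -> eqN N T T' -> eqN N (S + T) (S' + T').
Proof. by move=> h1 h2 n hn; rewrite !coefD h1 ?h2. Qed.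
Lemma eqN_mul N S T S' T' : eqN N S S' -> eqN N T T' -> eqN N (S * T) (S' * T').
Proof.
move=> h1 h2 n hn; rewrite !coefM; apply: eq_bigr => i _.
have hi : (i < N)%N by apply: leq_ltn_trans hn; rewrite -ltnS.
rewrite h1 // h2 //; apply: leq_ltn_trans hn; exact: leq_subr.
Qed.
Lemma eqN_low N S T : low N T -> eqN N (S + T) S.
Proof. by move=> h n hn; rewrite coefD h // addr0. Qed.
Lemma eqN_ext S T : (forall N, eqN N S T) -> S = T.
Proof. by move=> h; apply: ser_ext => n; apply: (h n.+1). Qed.

Lemma star_trunc U L n : low 1 U -> (n < L)%N ->
  sstar U n = (\sum_(k < L) U ^+ k) n.
Proof.
move=> hU hn; rewrite sstarE coef_sum (big_ord_widen L (fun k => (U ^+ k) n) hn).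
rewrite [RHS](bigID (fun k : 'I_L => (k < n.+1)%N)) /= [X in _ = _ + X]big1 ?addr0 //.
by move=> k hk; apply: (low_exp (k:=k) hU); rewrite ltnNge.
Qed.

Lemma eqN_star N U : low 1 U -> eqN N (sstar U) (\sum_(k < N) U ^+ k).
Proof. by move=> hU n hn; apply: star_trunc. Qed.

Lemma star0 : sstar (0 : ser) = 1 :> ser.
Proof.
apply: ser_ext => n; rewrite sstarE big_ord_recl expr0 big1 ?addr0 //.
by move=> i _; rewrite expr0n.
Qed.

Local Notation sm a e := (@smono K a e : ser).

Lemma smono_mull a e S n :
  (sm a e * S) n = if (e <= n)%N then a * S (n - e)%N else 0.
Proof.
rewrite coefM; case: leqP => he.
  have he' : (e < n.+1)%N by [].
  rewrite (bigD1 (Ordinal he')) //= /smono eqxx big1 ?addr0 // => i hi.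
  by rewrite ifN ?mul0r // -(inj_eq val_inj).
rewrite big1 // => i _; rewrite /smono ifN ?mul0r //.
by apply/eqP => hi; move: (ltn_ord i); rewrite hi ltnS leqNgt he.
Qed.

Lemma smono_mul a e b f : sm a e * sm b f = sm (a * b) (e + f) :> ser.
Proof.
apply: ser_ext => n; rewrite smono_mull /smono.
case: leqP => he.
  by rewrite -(eqn_add2r e) subnK // [(f + e)%N]addnC; case: eqP; rewrite ?mulr0.
case: eqP => // hn; move: he; rewrite hn ltnNge leq_addr //.
Qed.

Lemma smono_add a b e : sm a e + sm b e = sm (a + b) e :> ser.
Proof. by apply: ser_ext => n; rewrite coefD /smono; case: eqP; rewrite ?addr0. Qed.

Lemma smono0 e : sm 0 e = 0 :> ser.
Proof. by apply: ser_ext => n; rewrite /smono; case: eqP. Qed.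

Lemma smono10 : sm 1 0 = 1 :> ser.
Proof. by []. Qed.

Lemma smono_exp q c k : sm q c ^+ k = sm (q ^+ k) (k * c).
Proof.
elim: k => [|k IH]; first by rewrite expr0 mul0n.
by rewrite exprS IH smono_mul exprS mulSn.
Qed.

Lemma low_smono a e : low e (sm a e).
Proof. by move=> n hn; rewrite /smono ifN // neq_ltn hn. Qed.

End Ser.

Section Idem.
Variable R : comPzSemiRingType.
Hypothesis idR : forall x : R, x + x = x.
Implicit Types x y z : R.

Definition le x y := x + y = y.

Lemma le_refl x : le x x. Proof. exact: idR. Qed.
Lemma le_trans x y z : le x y -> le y z -> le x z.
Proof. by rewrite /le => h1 h2; rewrite -h2 addrA h1. Qed.
Lemma le_anti x y : le x y -> le y x -> x = y.
Proof. by rewrite /le => h1 h2; rewrite -h1 -[in LHS]h2 addrC. Qed.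
Lemma le_add x y z : le x z -> le y z -> le (x + y) z.
Proof. by rewrite /le => h1 h2; rewrite -addrA h2 h1. Qed.
Lemma le_addl x y : le x (x + y).
Proof. by rewrite /le addrA idR. Qed.
Lemma le_addr x y : le y (x + y).
Proof. by rewrite addrC; apply: le_addl. Qed.
Lemma le0 x : le 0 x. Proof. by rewrite /le add0r. Qed.
Lemma le_eq0 x : le x 0 -> x = 0. Proof. by rewrite /le addr0. Qed.
Lemma le_mulr x y z : le x y -> le (x * z) (y * z).
Proof. by rewrite /le -mulrDl => ->. Qed.
Lemma le_mull x y z : le x y -> le (z * x) (z * y).
Proof. by rewrite /le -mulrDr => ->. Qed.

Lemma le_sum (I : Type) (r : seq I) (P : pred I) (F : I -> R) y :
  (forall i, P i -> le (F i) y) -> le (\sum_(i <- r | P i) F i) y.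
Proof.
move=> h; elim: r => [|i r IH]; first by rewrite big_nil; apply: le0.
by rewrite big_cons; case: ifP => Pi //; apply: le_add => //; apply: h.
Qed.

Lemma le_sumr (I : eqType) (r : seq I) (P : pred I) (F : I -> R) x i :
  i \in r -> P i -> le x (F i) -> le x (\sum_(j <- r | P j) F j).
Proof.
move=> ir Pi h; rewrite (big_rem _ ir) Pi; apply: le_trans h _; exact: le_addl.
Qed.

Lemma le_sum_ord N (P : pred nat) (F : nat -> R) x m :
  (m < N)%N -> P m -> le x (F m) -> le x (\sum_(j < N | P j) F j).
Proof.
move=> hm Pm h; apply: (le_sumr (i := Ordinal hm)) => //; exact: mem_index_enum.
Qed.

Lemma mulrn_idem x m : (0 < m)%N -> x *+ m = x.
Proof.
case: m => // m _; elim: m => // m IH; by rewrite mulrS IH idR.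
Qed.

Lemma exprD_idem x y k :
  (x + y) ^+ k = \sum_(i < k.+1) x ^+ (k - i) * y ^+ i.
Proof.
rewrite exprDn; apply: eq_bigr => i _; apply: mulrn_idem.
by rewrite bin_gt0 -ltnS.
Qed.

Lemma sum0_eq (I : eqType) (r : seq I) (P : pred I) (F : I -> R) i :
  \sum_(j <- r | P j) F j = 0 -> i \in r -> P i -> F i = 0.
Proof.
move=> h ir Pi; apply: le_eq0; rewrite -h; apply: le_sumr ir Pi _; exact: le_refl.
Qed.

End Idem.

Section Main.
Variable K : comPzSemiRingType.
Hypothesis hid : idempotent_sr K.
Local Notation ser := (ser K).
Local Notation sm a e := (@smono K a e : ser).
Local Notation st U := (@sstar K U : ser).
Implicit Types S T U V M B : ser.

Lemma ser_idem S : S + S = S.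
Proof. by apply: ser_ext => n; rewrite coefD hid. Qed.

Lemma sle_ord N (m : 'I_N) (P : pred 'I_N) (F : 'I_N -> ser) x :
  P m -> le x (F m) -> le x (\sum_(j < N | P j) F j).
Proof. by move=> h2 h3; apply: (le_sumr ser_idem (mem_index_enum m) h2 h3). Qed.


Lemma sle_ordT N (m : 'I_N) (F : 'I_N -> ser) x :
  le x (F m) -> le x (\sum_(j < N) F j).
Proof. by move=> h3; apply: (le_sumr ser_idem (mem_index_enum m) _ h3). Qed.

Arguments sle_ordT {N} m {F x}.
Arguments sle_ord {N} m {P F x}.

Lemma sle_refl S : le S S. Proof. exact: le_refl ser_idem S. Qed.

Lemma low_add v S T : low v S -> low v T -> low v (S + T).
Proof. by move=> h1 h2 n hn; rewrite coefD h1 // h2 // addr0. Qed.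

Lemma star_add U V : low 1 U -> low 1 V -> st (U + V) = st U * st V :> ser.
Proof.
move=> hU hV; have hUV := low_add hU hV.
apply: eqN_ext => N.
apply: eqN_trans (eqN_star (N:=N) hUV) _.
apply: eqN_sym; apply: eqN_trans (eqN_mul (eqN_star (N:=N) hU) (eqN_star (N:=N) hV)) _.
rewrite big_distrl /=.
have -> : \sum_(k < N) (U + V) ^+ k =
    \sum_(i < N) \sum_(j < N | (i + j < N)%N) U ^+ i * V ^+ j.
  apply: le_anti.
    apply: le_sum => k _; rewrite exprD_idem //; last exact: ser_idem.
    apply: le_sum => i _.
    have hki : (k - i < N)%N by apply: leq_ltn_trans (leq_subr _ _) (ltn_ord k).
    apply: (sle_ordT (Ordinal hki)) => /=.
    have hi : (i < N)%N by apply: leq_ltn_trans (ltn_ord k); rewrite -ltnS.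
    apply: (sle_ord (Ordinal hi)) => /=; last exact: sle_refl.
    by rewrite subnK // -ltnS.
  apply: le_sum => i _; apply: le_sum => j hij.
  apply: (sle_ordT (Ordinal hij)) => /=.
  rewrite exprD_idem; last exact: ser_idem.
  have hj : (j < (i + j).+1)%N by rewrite ltnS leq_addl.
  apply: (sle_ordT (Ordinal hj)) => /=.
  by rewrite addnK; exact: sle_refl.
have -> : \sum_(i < N) U ^+ i * \sum_(j < N) V ^+ j =
   \sum_(i < N) \sum_(j < N | (i + j < N)%N) U ^+ i * V ^+ j +
   \sum_(i < N) \sum_(j < N | ~~ (i + j < N)%N) U ^+ i * V ^+ j.
  rewrite -big_split; apply: eq_bigr => i _.
  by rewrite big_distrr (bigID (fun j : 'I_N => (i + j < N)%N)).
apply: eqN_low; apply: low_sum => i _; apply: low_sum => j hj.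
apply: (low_le _ (low_mul (low_exp hU) (low_exp hV))).
by rewrite leqNgt.
Qed.

Lemma star_idem B : low 1 B -> st B * st B = st B :> ser.
Proof. by move=> hB; rewrite -star_add // ser_idem. Qed.

Lemma star_exp B k : low 1 B -> (0 < k)%N -> st B ^+ k = st B.
Proof.
move=> hB; case: k => // k _; elim: k => [|k IH]; first by rewrite expr1.
by rewrite exprS IH star_idem.
Qed.

Lemma low1_mul M T : low 1 M -> low 1 (M * T).
Proof. by move=> h; rewrite -[1%N]addn0; apply: low_mul h (low0 _). Qed.

Lemma star_mulstar M B : low 1 M -> low 1 B ->
  st (M * st B) = 1 + M * st M * st B :> ser.
Proof.
move=> hM hB; have hMB : low 1 (M * st B) := low1_mul _ hM.
apply: eqN_ext => N.
apply: eqN_trans (eqN_le (leqnSn N) (eqN_star (N:=N.+1) hMB)) _.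
rewrite big_ord_recl expr0.
have -> : \sum_(i < N) (M * st B) ^+ (lift ord0 i) = M * (\sum_(i < N) M ^+ i) * st B.
  rewrite mulr_sumr mulr_suml; apply: eq_bigr => i _.
  by rewrite lift0 exprMn star_exp // exprS.
apply: eqN_add => //; apply: eqN_mul => //; apply: eqN_mul => //.
apply: eqN_sym; exact: eqN_star.
Qed.

Lemma star_rescale U m : low 1 U -> (0 < m)%N ->
  st U = (\sum_(j < m) U ^+ j) * st (U ^+ m) :> ser.
Proof.
move=> hU hm; have hUm : low 1 (U ^+ m) by apply: low_le (low_exp hU).
apply: eqN_ext => N.
apply: eqN_trans (eqN_le (leq_pmull N hm) (eqN_star (N:=(m * N)) hU)) _.
apply: eqN_sym; apply: eqN_trans (eqN_mul (@eqN_refl K N (\sum_(j < m) U ^+ j)) (eqN_star (N:=N) hUm)) _.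
rewrite big_distrl /=.
have -> : \sum_(j < m) U ^+ j * \sum_(l < N) (U ^+ m) ^+ l = \sum_(k < m * N) U ^+ k.
  apply: le_anti.
    apply: le_sum => j _; rewrite mulr_sumr; apply: le_sum => l _.
    rewrite -exprM -exprD.
    have hjl : (j + m * l < m * N)%N.
      apply: (@leq_trans (m * l.+1)); first by rewrite mulnS ltn_add2r.
      by rewrite leq_mul2l ltn_ord orbT.
    by apply: (sle_ordT (Ordinal hjl)); exact: sle_refl.
  apply: le_sum => k _.
  have hk1 : (k %% m < m)%N by rewrite ltn_pmod.
  apply: (sle_ordT (Ordinal hk1)) => /=.
  rewrite mulr_sumr.
  have hk2 : (k %/ m < N)%N by rewrite ltn_divLR // [(N * m)%N]mulnC.
  apply: (sle_ordT (Ordinal hk2)) => /=.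
  have e : (k %% m + m * (k %/ m))%N = k by rewrite addnC mulnC -divn_eq.
  by rewrite -exprM -exprD e; exact: sle_refl.
exact: eqN_refl.
Qed.

Definition term c (t : K * nat * K) : ser := sm t.1.1 t.1.2 * st (sm t.2 c).
Definition goodc c S := exists l : seq (K * nat * K), S = \sum_(t <- l) term c t.
Definition good S := exists c, (0 < c)%N /\ goodc c S.

Lemma goodc0 c : goodc c 0.
Proof. by exists [::]; rewrite big_nil. Qed.
Lemma goodc_add c S T : goodc c S -> goodc c T -> goodc c (S + T).
Proof. by move=> [l1 ->] [l2 ->]; exists (l1 ++ l2); rewrite big_cat. Qed.
Lemma goodc_term c t : goodc c (term c t).
Proof. by exists [:: t]; rewrite big_seq1. Qed.
Lemma goodc_sum c (I : Type) (r : seq I) (F : I -> ser) :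
  (forall i, goodc c (F i)) -> goodc c (\sum_(i <- r) F i).
Proof.
move=> h; elim: r => [|i r IH]; first by rewrite big_nil; exact: goodc0.
by rewrite big_cons; apply: goodc_add.
Qed.

Lemma st_sm0 c : st (sm 0 c) = 1.
Proof. by rewrite smono0 star0. Qed.
Lemma goodc_mono c a e : goodc c (sm a e).
Proof.
have <- : term c (a, e, 0) = sm a e by rewrite /term /= st_sm0 mulr1.
exact: goodc_term.
Qed.
Lemma goodc1 c : goodc c 1.
Proof. rewrite -smono10; exact: goodc_mono. Qed.
Lemma goodc_star_mono c q : goodc c (st (sm q c)).
Proof.
have <- : term c (1, 0%N, q) = st (sm q c) by rewrite /term /= smono10 mul1r.
exact: goodc_term.
Qed.

Lemma low1_sm q c : (0 < c)%N -> low 1 (sm q c).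
Proof. by move=> hc; exact: (low_le hc (low_smono q (e:=c))). Qed.

Lemma term_mul c t t' : (0 < c)%N ->
  term c t * term c t' = term c (t.1.1 * t'.1.1, (t.1.2 + t'.1.2)%N, t.2 + t'.2).
Proof.
move=> hc; rewrite /term /= mulrACA smono_mul -star_add ?smono_add //;
  exact: low1_sm.
Qed.

Lemma goodc_mul c S T : (0 < c)%N -> goodc c S -> goodc c T -> goodc c (S * T).
Proof.
move=> hc [l ->] [l' ->]; rewrite big_distrl /=; apply: goodc_sum => t.
rewrite big_distrr /=; apply: goodc_sum => t'.
rewrite term_mul //; exact: goodc_term.
Qed.

Lemma term_rescale c m t : (0 < c)%N -> (0 < m)%N -> goodc (m * c) (term c t).
Proof.
move=> hc hm; rewrite /term (star_rescale _ hm); last exact: low1_sm.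
rewrite mulr_suml mulr_sumr; apply: goodc_sum => j.
rewrite !smono_exp mulrA smono_mul.
exact: (goodc_term (m * c) (t.1.1 * t.2 ^+ j, (t.1.2 + j * c)%N, t.2 ^+ m)).
Qed.

Lemma goodc_rescale c m S : (0 < c)%N -> (0 < m)%N -> goodc c S -> goodc (m * c) S.
Proof.
move=> hc hm [l ->]; apply: goodc_sum => t; exact: term_rescale.
Qed.

Lemma good_add S T : good S -> good T -> good (S + T).
Proof.
move=> [c1 [h1 g1]] [c2 [h2 g2]]; exists (c2 * c1)%N; split; first by rewrite muln_gt0 h1 h2.
apply: goodc_add; first exact: goodc_rescale.
by rewrite mulnC; apply: goodc_rescale.
Qed.

Lemma good_mul S T : good S -> good T -> good (S * T).
Proof.
move=> [c1 [h1 g1]] [c2 [h2 g2]]; exists (c2 * c1)%N.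
have hc : (0 < c2 * c1)%N by rewrite muln_gt0 h1 h2.
split => //; apply: goodc_mul => //; first exact: goodc_rescale.
by rewrite mulnC; apply: goodc_rescale.
Qed.

Lemma good1 : good 1.
Proof. by exists 1%N; split => //; exact: goodc1. Qed.
Lemma good_mono a e : good (sm a e).
Proof. by exists 1%N; split => //; exact: goodc_mono. Qed.

Lemma good_prod (I : eqType) (l : seq I) (F : I -> ser) :
  (forall t, t \in l -> good (F t)) -> good (\prod_(t <- l) F t).
Proof.
elim: l => [|i l IH] h; first by rewrite big_nil; exact: good1.
rewrite big_cons; apply: good_mul; first by apply: h; rewrite mem_head.
by apply: IH => t tl; apply: h; rewrite inE tl orbT.
Qed.

Lemma good_poly S : is_poly S -> good S.
Proof.
move=> [N hN].
have -> : S = \sum_(e < N) sm (S e) e.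
  apply: ser_ext => n; rewrite coef_sum; case: (ltnP n N) => hn.
    rewrite (bigD1 (Ordinal hn)) //= /smono eqxx big1 ?addr0 // => i hi.
    rewrite ifN //; apply: contra hi => /eqP h; apply/eqP; apply: val_inj => /=.
    by rewrite h.
  rewrite hN // big1 // => i _.
  by rewrite /smono ifN // neq_ltn (leq_trans (ltn_ord i) hn) orbT.
exists 1%N; split => //; apply: goodc_sum => i; exact: goodc_mono.
Qed.

Lemma st0 U : st U 0%N = 1.
Proof. by rewrite sstarE big_ord_recl big_ord0 addr0 expr0. Qed.

Lemma low1_term c t : low 1 (term c t) -> low 1 (sm t.1.1 t.1.2).
Proof.
move=> h n; rewrite ltnS leqn0 => /eqP ->.
have := h 0%N isT; rewrite /term coefM big_ord_recl big_ord0 addr0 /= st0 mulr1.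
by [].
Qed.

Lemma good_star_sm a e : low 1 (sm a e) -> good (st (sm a e)).
Proof.
case: e => [|e] h.
  have ha : a = 0 by have := h 0%N isT; rewrite /smono /=.
  by rewrite ha smono0 star0; exact: good1.
by exists e.+1; split => //; exact: goodc_star_mono.
Qed.

Lemma good_star_term c t : (0 < c)%N -> low 1 (term c t) -> good (st (term c t)).
Proof.
move=> hc h; have hM := low1_term h.
rewrite /term star_mulstar //; last exact: low1_sm.
apply: good_add; first exact: good1.
apply: good_mul; last by exists c; split => //; exact: goodc_star_mono.
apply: good_mul; first exact: good_mono.
exact: good_star_sm.
Qed.

Lemma star_sum c (l : seq (K * nat * K)) :
  (forall t, t \in l -> low 1 (term c t)) ->
  st (\sum_(t <- l) term c t) = \prod_(t <- l) st (term c t).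
Proof.
elim: l => [|t l IH] h; first by rewrite !big_nil star0.
rewrite !big_cons star_add; first by rewrite IH // => t' tl; apply: h; rewrite inE tl orbT.
  by apply: h; rewrite mem_head.
by rewrite big_seq; apply: low_sum => t' tl; apply: h; rewrite inE tl orbT.
Qed.

Lemma good_star S : good S -> low 1 S -> good (st S).
Proof.
move=> [c [hc [l ->]]] hS.
have ht : forall t, t \in l -> low 1 (term c t).
  move=> t tl n; rewrite ltnS leqn0 => /eqP ->.
  have := hS 0%N isT; rewrite coef_sum => h0.
  exact: (sum0_eq hid h0 tl).
rewrite star_sum //; apply: good_prod => t tl; exact: good_star_term hc (ht t tl).
Qed.

Lemma rational_good (S : series K) : rational S -> good S.
Proof.
elim => [S0 hp | S0 T _ hS _ hT | S0 T _ hS _ hT | U _ hU hU0].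
- exact: good_poly.
- exact: good_add hS hT.
- exact: good_mul hS hT.
- apply: good_star => // n; rewrite ltnS leqn0 => /eqP ->; exact: hU0.
Qed.

End Main.

Unset Implicit Arguments.

Theorem lemma1 (K : comPzSemiRingType) (hid : idempotent_sr K)
  (S : series K) (hS : rational S) :
  exists (r : nat) (P : nat -> series K) (q : nat -> K) (c : nat),
    (0 < c)%N /\
    (forall i, (i < r)%N -> is_poly (P i)) /\
    S = sbig r (fun i => smul (P i) (sstar (smono (q i) c))).
Proof.
have [c [hc [l e]]] := rational_good hid hS.
pose t0 := ((0 : K), 0%N, (0 : K)).
exists (size l), (fun i => smono (nth t0 l i).1.1 (nth t0 l i).1.2),
  (fun i => (nth t0 l i).2), c.
split => //; split.
  move=> i _; exists ((nth t0 l i).1.2).+1 => n hn.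
  by rewrite /smono ifN // neq_ltn hn orbT.
rewrite e; apply: functional_extensionality => n.
rewrite coef_sum (big_nth t0) big_mkord /sbig.
by apply: eq_bigr => i _.
Qed.
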